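(* Let $n\ge 2$ and let $\mathsf{M}$ be a square submatrix of a matrix in $\mathscr{D}_n$. Then $$|\det\mathsf{M}|\in\{0,2^0,2^1,\dots,2^{\lfloor n/2\rfloor}\}.$$
   Context: Let $e_1,\dots,e_n$ be the standard basis of $\mathbb{R}^n$ and $[\pm n]=\{-n,\dots,-1,1,\dots,n\}$. For $i\in[n-1]$ and $r\in[\pm n]$ with $i<|r|$, set $d(i,r)=e_i+\mathrm{sgn}(r)\,e_{|r|}\in\mathbb{R}^n$. $\mathscr{D}_n$ denotes the set of $n\times n$ real matrices each of whose rows is of the form $d(i,r)$ for some such $i,r$ (rows may repeat). A square submatrix is obtained by deleting some rows and the same number of columns. *)

(* Defs.v *)
From HB Require Import structures.
From mathcomp Require Import all_boot all_order all_algebra.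
Set Implicit Arguments. Unset Strict Implicit. Unset Printing Implicit Defensive.
Import Order.TTheory GRing.Theory Num.Theory.
Local Open Scope ring_scope.

(* 0-based indices: the paper's d(i,r) with 1 <= i < |r| <= n corresponds to
   i' = i-1 < j' = |r|-1 (as ordinals of 'I_n), sign s = (r < 0). *)
Definition dvec (R : nzRingType) (n : nat) (i j : 'I_n) (s : bool) : 'rV[R]_n :=
  \row_k ((k == i)%:R + (-1) ^+ s * (k == j)%:R).

Definition in_Dn (R : nzRingType) (n : nat) (A : 'M[R]_n) : Prop :=
  forall a : 'I_n, exists (i j : 'I_n) (s : bool),
    (i < j)%N /\ row a A = dvec R i j s.

(* square submatrix of A of size k: rows f, columns g, both strictly increasing
   (i.e. obtained by deleting rows/columns, order preserved). *)
Definition strict_incr (k n : nat) (f : 'I_k -> 'I_n) : Prop :=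
  forall a b : 'I_k, (a < b)%N -> (f a < f b)%N.

(* Main.v *)
Require Import Defs.
From HB Require Import structures.
From mathcomp Require Import all_boot all_order all_algebra.
Import Order.TTheory GRing.Theory Num.Theory.
Local Open Scope ring_scope.

Section Aux.
Set Implicit Arguments. Unset Strict Implicit.
Variable R : realFieldType.

Definition ent (x : R) := (x == 0) || (x == 1) || (x == -1).

Definition good k (M : 'M[R]_k) : Prop :=
  (forall i j, ent (M i j)) /\
  (forall i j1 j2 j3, j1 != j2 -> j1 != j3 -> j2 != j3 ->
     M i j1 = 0 \/ M i j2 = 0 \/ M i j3 = 0).

Definition concl (k : nat) (d : R) :=
  `|d| = 0 \/ exists e : nat, (e.*2 <= k)%N /\ `|d| = 2 ^+ e.

Lemma pigeon (p1 p2 p3 q1 q2 q3 : bool) : p1 || q1 -> p2 || q2 -> p3 || q3 ->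
  ~~ (p1 && p2) -> ~~ (p1 && p3) -> ~~ (p2 && p3) ->
  ~~ (q1 && q2) -> ~~ (q1 && q3) -> ~~ (q2 && q3) -> False.
Proof. by case: p1; case: p2; case: p3; case: q1; case: q2; case: q3. Qed.

Lemma ent_norm x : ent x -> x != 0 -> `|x| = 1.
Proof.
by rewrite /ent => /orP[/orP[]|] /eqP -> //; rewrite ?eqxx // ?normr1 ?normrN1.
Qed.

Lemma entM x y : ent x -> ent y -> ent (x * y).
Proof.
rewrite /ent => /orP[/orP[]|] /eqP -> /orP[/orP[]|] /eqP ->;
  rewrite ?mul0r ?mulr0 ?mul1r ?mulr1 ?mulrNN ?mulr1 ?eqxx ?orbT //.
Qed.

Lemma entN x : ent x -> ent (- x).
Proof.
rewrite /ent => /orP[/orP[]|] /eqP ->; rewrite ?oppr0 ?opprK ?eqxx ?orbT //.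
Qed.

Lemma ent_sq x : ent x -> x != 0 -> x * x = 1.
Proof.
rewrite /ent => /orP[/orP[]|] /eqP -> //; rewrite ?eqxx // ?mulr1 ?mulrNN ?mulr1 //.
Qed.

Lemma ent_sub x y : ent x -> ent y -> x != 0 -> y != 0 ->
  `|x - y| = 0 \/ `|x - y| = 2.
Proof.
rewrite /ent => /orP[/orP[]|] /eqP -> /orP[/orP[]|] /eqP ->;
 rewrite ?eqxx //= => _ _; rewrite ?subrr ?normr0; auto; right.
  by rewrite opprK ger0_norm ?addr_ge0 ?ler01.
by rewrite -opprD normrN ger0_norm ?addr_ge0 ?ler01.
Qed.

Lemma concl_mono k k' d : (k <= k')%N -> concl k d -> concl k' d.
Proof.
move=> kk [h|[e [he h]]]; [by left|right; exists e; split=> //].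
exact: leq_trans he kk.
Qed.

Lemma concl_sgn k x d : `|x| = 1 -> concl k d -> concl k (x * d).
Proof. by move=> hx; rewrite /concl normrM hx !mul1r. Qed.

Lemma concl_two k x d : `|x| = 2 -> concl k d -> concl k.+2 (x * d).
Proof.
move=> hx [h|[e [he h]]]; first by left; rewrite normrM h mulr0.
right; exists e.+1; split; first by rewrite doubleS ltnS ltnS.
by rewrite normrM hx h exprS.
Qed.

Lemma concl_cof k (M : 'M[R]_k.+1) i j :
  concl k (\det (row' i (col' j M))) -> concl k (cofactor M i j).
Proof.
move=> h; rewrite /cofactor.
by apply: concl_sgn => //; rewrite normrX normrN1 expr1n.
Qed.

Lemma good_sub k k' (M : 'M[R]_k) (B : 'M[R]_k') (f : 'I_k' -> 'I_k) g :
  injective g -> (forall i j, B i j = M (f i) (g j)) -> good M -> good B.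
Proof.
move=> ig hB [h1 h2]; split=> [i j|i j1 j2 j3 n12 n13 n23]; rewrite ?hB //.
by apply: h2; rewrite (inj_eq ig).
Qed.

Lemma det_col0 k (M : 'M[R]_k) j : (forall i, M i j = 0) -> \det M = 0.
Proof.
by move=> h; rewrite (expand_det_col _ j) big1 // => i _; rewrite h mul0r.
Qed.

Lemma rowop k (M : 'M[R]_k) r1 r2 t : r1 != r2 ->
  \det (\matrix_(i, j) if i == r2 then M r2 j - t * M r1 j else M i j) = \det M.
Proof.
move=> ne.
pose C := \matrix_(i, j) if i == r2 then M r1 j else M i j.
have C0 : \det C = 0.
  apply: (determinant_alternate ne) => j; rewrite !mxE eqxx (negbTE ne) //.
rewrite (@determinant_multilinear _ _ _ M C r2 1 (- t)).
- by rewrite C0 mulr0 addr0 mul1r.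
- by apply/rowP => j; rewrite !mxE eqxx mul1r mulNr.
- by apply/matrixP => i j; rewrite !mxE eq_sym (negbTE (neq_lift _ _)).
- by apply/matrixP => i j; rewrite !mxE eq_sym (negbTE (neq_lift _ _)).
Qed.


Lemma main k (M : 'M[R]_k) : good M -> concl k (\det M).
Proof.
elim/ltn_ind: k M => -[|[|k]] IH M gM.
- by right; exists 0%N; rewrite det_mx00 normr1 expr0.
- rewrite det_mx11; have [g1 _] := gM.
  case: (eqVneq (M 0 0) 0) => [->|nz]; first by left; rewrite normr0.
  by right; exists 0%N; rewrite expr0 (ent_norm (g1 _ _) nz).
have IHk k' (N : 'M[R]_k') : (k' <= k.+1)%N -> good N -> concl k' (\det N).
  by move=> le; apply: IH; rewrite ltnS.
clear IH.
suff H m (N : 'M[R]_k.+2) : good N -> (#|[pred i | N i ord0 != 0%R]| <= m)%N ->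
    concl k.+2 (\det N).
  exact: (H _ M gM (leqnn _)).
clear M gM; elim: m N => [|m IHm] M gM cnt.
  left; rewrite (det_col0 (j:=ord0)) ?normr0 // => i.
  case: (eqVneq (M i ord0) 0) => [//|hi]; exfalso.
  have : (0 < #|[pred i | M i ord0 != 0%R]|)%N.
      by apply/card_gt0P; exists i; rewrite inE.
  by rewrite ltnNge cnt.
case: (pickP [pred i | M i ord0 != 0]) => [r1 /= h1 | h0]; last first.
  left; rewrite (det_col0 (j:=ord0)) ?normr0 // => i; apply/eqP.
  by have := h0 i => /= /negbFE.
have [g1 g3] := gM.
have a1n : `|M r1 ord0| = 1 := ent_norm (g1 _ _) h1.
case: (pickP [pred i | (i != r1) && (M i ord0 != 0)]) => [r2 /andP[ne21 h2] | hno]; last first.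
  rewrite (expand_det_col _ ord0) (bigD1 r1) //= big1 ?addr0; last first.
    by move=> i ne; have := hno i; rewrite /= ne /= => /negbFE/eqP ->; rewrite mul0r.
  apply: concl_sgn => //; apply: (concl_mono (leqnSn _)); apply: concl_cof.
  apply: IHk => //.
  apply: (good_sub (f := lift r1) (g := lift ord0) (M := M)) => //.
    exact: lift_inj.
  by move=> i j; rewrite !mxE.
set t := M r2 ord0 * M r1 ord0.
have ne12 : r1 != r2 by rewrite eq_sym.
pose M' := \matrix_(i, j) if i == r2 then M r2 j - t * M r1 j else M i j.
have dM : \det M = \det M' by rewrite rowop.
have M'0 : M' r2 ord0 = 0.
  by rewrite mxE eqxx /t -mulrA (ent_sq (g1 _ _) h1) mulr1 subrr.
have M'o i j : i != r2 -> M' i j = M i j by move=> /negbTE ne; rewrite mxE ne.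
have pairr r (hr : M r ord0 != 0) a b : a != ord0 -> b != ord0 -> a != b ->
    ~~ ((M r a != 0) && (M r b != 0)).
  move=> a0 b0 ab.
  have n0a : ord0 != a by rewrite eq_sym.
  have n0b : ord0 != b by rewrite eq_sym.
  case: (g3 r _ _ _ n0a n0b ab) => [e|[->|->]]; rewrite ?eqxx ?andbF //.
  by move: hr; rewrite e eqxx.
case: (pickP [pred j | (j != ord0) && (M r1 j != 0) && (M r2 j != 0)]) =>
    [j /andP[/andP[j0 h1j] h2j] | hnj].
  have zr r (hr : M r ord0 != 0) (hrj : M r j != 0) l : l != ord0 -> l != j -> M r l = 0.
    move=> l0 lj; case: (eqVneq (M r l) 0) => [//|hl]; exfalso.
    have jl : j != l by rewrite eq_sym.
    by have := pairr r hr j l j0 l0 jl; rewrite hrj hl.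
  rewrite dM (expand_det_row _ r2) (bigD1 j) //= big1 ?addr0; last first.
    move=> l lj; case: (eqVneq l ord0) => [->|l0]; first by rewrite M'0 mul0r.
    by rewrite mxE eqxx (zr r1) // (zr r2) // mulr0 subr0 mul0r.
  have hx : `|M' r2 j| = 0 \/ `|M' r2 j| = 2.
    rewrite mxE eqxx; apply: ent_sub; [exact: g1 | by apply: entM => //; apply: entM
      | by [] | by rewrite /t !mulf_neq0].
  case: hx => hx; first by left; rewrite normrM hx mul0r.
  case: (unliftP r2 r1) => [i1 e1|e1]; last by move: ne12; rewrite e1 eqxx.
  case: (unliftP j ord0) => [l0 e0|e0]; last by move: j0; rewrite -e0 eqxx.
  rewrite /cofactor mulrCA; apply: concl_sgn; first by rewrite normrX normrN1 expr1n.
  apply: concl_two => //.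
  rewrite (expand_det_row _ i1) (bigD1 l0) //= big1 ?addr0; last first.
    move=> l ll0; rewrite !mxE -e1 (negbTE ne12) (zr r1) ?mul0r //.
      by rewrite e0 (inj_eq lift_inj).
    by rewrite eq_sym neq_lift.
  apply: concl_sgn; first by rewrite !mxE -e1 (negbTE ne12) -e0.
  apply: concl_cof; apply: IHk => //.
  apply: (good_sub (f := fun i => lift r2 (lift i1 i)) (g := fun l => lift j (lift l0 l)) (M := M)) => //.
    by move=> a b /lift_inj /lift_inj.
  by move=> a b; rewrite !mxE eq_sym (negbTE (neq_lift _ _)).
have gM' : good M'.
  split.
    move=> i l; case: (eqVneq i r2) => [->|ne]; last by rewrite M'o.
    case: (eqVneq l ord0) => [->|l0]; first by rewrite M'0 /ent eqxx.
    have := hnj l; rewrite /= l0 /= => /negbT; rewrite negb_and !negbK.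
    case/orP=> /eqP z; rewrite mxE eqxx z ?mulr0 ?subr0 ?sub0r //.
    by apply: entN; apply: entM => //; apply: entM.
  move=> i j1 j2 j3 n12 n13 n23; case: (eqVneq i r2) => [->|ne]; last first.
    by rewrite !M'o //; apply: g3.
  case: (eqVneq (M' r2 j1) 0) => [z|n1]; first by left.
  case: (eqVneq (M' r2 j2) 0) => [z|n2]; first by right; left.
  case: (eqVneq (M' r2 j3) 0) => [z|n3]; first by right; right.
  exfalso.
  have cov l : M' r2 l != 0 -> (l != ord0) && ((M r1 l != 0) || (M r2 l != 0)).
    move=> hl; apply/andP; split.
      by apply/eqP => e; move: hl; rewrite e M'0 eqxx.
    case: (eqVneq (M r1 l) 0) => [a|//]; case: (eqVneq (M r2 l) 0) => [b|]; last by rewrite orbT.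
    by move: hl; rewrite mxE eqxx a b mulr0 subr0 eqxx.
  case/andP: (cov _ n1) => z1 c1; case/andP: (cov _ n2) => z2 c2.
  case/andP: (cov _ n3) => z3 c3.
  apply: (pigeon c1 c2 c3); by apply: pairr.
rewrite dM; apply: (IHm M') => //.
have sub : [pred i | M' i ord0 != 0] \subset [predD1 [pred i | M i ord0 != 0] & r2].
  apply/subsetP => i; rewrite !inE; case: (eqVneq i r2) => [->|ne].
    by rewrite M'0 eqxx.
  by rewrite M'o.
apply: leq_trans (subset_leq_card sub) _.
have e := cardD1 r2 [pred i | M i ord0 != 0%R].
by move: cnt; rewrite e inE h2 add1n ltnS.
Qed.

End Aux.

Lemma sincr_inj k n (f : 'I_k -> 'I_n) : strict_incr f -> injective f.
Proof.
move=> hf a b e; case: (ltngtP a b) => h.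
- by have := hf _ _ h; rewrite e ltnn.
- by have := hf _ _ h; rewrite e ltnn.
- exact: val_inj.
Qed.

Lemma dvec_zero (R : realFieldType) n (i0 j0 c : 'I_n) s :
  c != i0 -> c != j0 -> dvec R i0 j0 s 0 c = 0.
Proof. by move=> /negbTE h1 /negbTE h2; rewrite mxE h1 h2 mulr0 addr0. Qed.

Lemma dvec_ent (R : realFieldType) n (i0 j0 c : 'I_n) s :
  (i0 < j0)%N -> ent (dvec R i0 j0 s 0 c).
Proof.
move=> lt; rewrite mxE /ent.
case: (eqVneq c i0) => [->|n1].
  have -> : (i0 == j0) = false by apply: ltn_eqF.
  by rewrite mulr0 addr0 eqxx orbT.
case: (eqVneq c j0) => [_|n2]; last by rewrite /= mulr0 addr0 eqxx.
by case: s; rewrite /= add0r ?expr1 ?expr0 mulr1 eqxx ?orbT.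
Qed.

Theorem mainTheorem4 (R : realFieldType) (n : nat) (hn : (2 <= n)%N)
  (A : 'M[R]_n) (hA : in_Dn A)
  (k : nat) (f g : 'I_k -> 'I_n) (hf : strict_incr f) (hg : strict_incr g) :
  `|\det (mxsub f g A)| = 0 \/
  exists e : nat, (e <= n./2)%N /\ `|\det (mxsub f g A)| = 2 ^+ e.
Proof.
have fi := sincr_inj hf; have gi := sincr_inj hg.
have kn : (k <= n)%N by have := @leq_card _ _ f fi; rewrite !card_ord.
have gd : good (mxsub f g A).
  split.
    move=> i j; rewrite mxE; have [i0 [j0 [s [ij hr]]]] := hA (f i).
    have -> : A (f i) (g j) = row (f i) A 0 (g j) by rewrite mxE.
    by rewrite hr; apply: dvec_ent.
  move=> i j1 j2 j3 n12 n13 n23; rewrite !mxE.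
  have [i0 [j0 [s [ij hr]]]] := hA (f i).
  have E c : A (f i) c = dvec R i0 j0 s 0 c by rewrite -hr mxE.
  rewrite !E.
  case: (boolP ((g j1 == i0) || (g j1 == j0))) => [c1|]; last first.
    by rewrite negb_or => /andP[a b]; left; apply: dvec_zero.
  case: (boolP ((g j2 == i0) || (g j2 == j0))) => [c2|]; last first.
    by rewrite negb_or => /andP[a b]; right; left; apply: dvec_zero.
  case: (boolP ((g j3 == i0) || (g j3 == j0))) => [c3|]; last first.
    by rewrite negb_or => /andP[a b]; right; right; apply: dvec_zero.
  exfalso; apply: (pigeon c1 c2 c3); apply/negP => /andP[/eqP a /eqP b].
  - by move: n12; rewrite -(inj_eq gi) a b eqxx.
  - by move: n13; rewrite -(inj_eq gi) a b eqxx.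
  - by move: n23; rewrite -(inj_eq gi) a b eqxx.
  - by move: n12; rewrite -(inj_eq gi) a b eqxx.
  - by move: n13; rewrite -(inj_eq gi) a b eqxx.
  - by move: n23; rewrite -(inj_eq gi) a b eqxx.
case: (main gd) => [h|[e [he h]]]; [by left | right; exists e; split=> //].
by rewrite -(doubleK e); apply: half_leq; apply: leq_trans he kn.
Qed.
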